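(* Let $\beta>0$, $\rho\ge0$, and let $A^C_\mu$, $A^A_\mu$ be the Harrington–Shepard SU(2) caloron and anticaloron (with the same $\beta,\rho$, centered at the origin with zero temporal phase). For $\alpha\in\{C,A\}$ and $a\in\{1,2,3\}$ define $$I^a_\alpha(\tau,\vec x)=\mathrm{tr}\Big(t^a\,F^\alpha_{\mu\nu}(\tau,\vec 0)\,\{(\tau,\vec 0),(\tau,\vec x)\}_\alpha\,F^\alpha_{\mu\nu}(\tau,\vec x)\,\{(\tau,\vec x),(\tau,\vec 0)\}_\alpha\Big)$$ (summed over $\mu,\nu$). Then, wherever these expressions are defined, $I^a_A(\tau,\vec x)=I^a_C(\tau,-\vec x)$ for all $a$; i.e. the anticaloron integrand is obtained from the caloron integrand by the parity transformation $\vec x\to-\vec x$.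
   Context: Gauge group SU(2), $t_a=\frac12\sigma_a$ (Pauli matrices), summation over repeated indices, Euclidean coordinates $x_4=\tau$, $\mu,\nu\in\{1,2,3,4\}$. 't Hooft symbols: $\eta^a_{\mu\nu}=\epsilon^a_{\mu\nu}+\delta^a_\mu\delta_{\nu4}-\delta^a_\nu\delta_{\mu4}$, $\bar\eta^a_{\mu\nu}=\epsilon^a_{\mu\nu}-\delta^a_\mu\delta_{\nu4}+\delta^a_\nu\delta_{\mu4}$, where $\epsilon^a_{\mu\nu}=\epsilon_{a\mu\nu}$ for $\mu,\nu\in\{1,2,3\}$ and $0$ otherwise. Prepotential $\Pi(\tau,r)=1+\frac{\pi\rho^2}{\beta r}\frac{\sinh(2\pi r/\beta)}{\cosh(2\pi r/\beta)-\cos(2\pi\tau/\beta)}$, $r=|\vec x|$. Caloron $A^C_\mu=\bar\eta^a_{\mu\nu}t_a\partial_\nu\ln\Pi$, anticaloron $A^A_\mu=\eta^a_{\mu\nu}t_a\partial_\nu\ln\Pi$. Field strength $F_{\mu\nu}=\partial_\mu A_\nu-\partial_\nu A_\mu-i[A_\mu,A_\nu]$. The Wilson line $\{(\tau,\vec y),(\tau,\vec z)\}_\alpha$ is the path-ordered exponential $\mathcal P\exp[i\int dz_\mu A^\alpha_\mu]$ along the straight segment from $(\tau,\vec y)$ to $(\tau,\vec z)$. *)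

(* Defs.v *)
From mathcomp Require Import all_boot all_order all_algebra.
From mathcomp Require Import all_classical all_reals all_analysis.
From mathcomp Require Import complex.
Set Implicit Arguments. Unset Strict Implicit. Unset Printing Implicit Defensive.
Import Order.TTheory GRing.Theory Num.Theory.
Local Open Scope ring_scope.
Local Open Scope complex_scope.

(* Euclidean points x = (x_1,x_2,x_3,x_4) are row vectors 'rV[R]_4;
   index k : 'I_4 stands for mu = k+1, so index 3 is x_4 = tau.
   Colour index a : 'I_3 stands for a = 1,2,3. *)

Definition pt (R : realType) (tau : R) (x : 'rV[R]_3) : 'rV[R]_4 :=
  \row_(i < 4) (if (i < 3)%N as b return R then x 0 (inord i) else tau).

Definition evec (R : realType) (nu : 'I_4) : 'rV[R]_4 := delta_mx 0 nu.
Definition partial (R : realType) (nu : 'I_4) (f : 'rV[R]_4 -> R) (x : 'rV[R]_4) : R :=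
  'D_(evec R nu) f x.

Definition sinh (R : realType) (y : R) : R := (expR y - expR (- y)) / 2.
Definition cosh (R : realType) (y : R) : R := (expR y + expR (- y)) / 2.

Definition leviCivita (R : realType) (a b c : nat) : R :=
  if [|| (a, b, c) == (0, 1, 2)%N, (a, b, c) == (1, 2, 0)%N | (a, b, c) == (2, 0, 1)%N]
  then 1
  else if [|| (a, b, c) == (0, 2, 1)%N, (a, b, c) == (2, 1, 0)%N | (a, b, c) == (1, 0, 2)%N]
  then -1 else 0.

Definition kdelta (R : realType) (m n : nat) : R := if m == n then 1 else 0.

Definition epsS (R : realType) (a : 'I_3) (mu nu : 'I_4) : R :=
  if ((mu < 3) && (nu < 3))%N then leviCivita R a mu nu else 0.

Definition eta (R : realType) (a : 'I_3) (mu nu : 'I_4) : R :=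
  epsS R a mu nu + kdelta R a mu * kdelta R nu 3 - kdelta R a nu * kdelta R mu 3.
Definition etabar (R : realType) (a : 'I_3) (mu nu : 'I_4) : R :=
  epsS R a mu nu - kdelta R a mu * kdelta R nu 3 + kdelta R a nu * kdelta R mu 3.

Definition rad (R : realType) (x : 'rV[R]_4) : R :=
  Num.sqrt (x 0 0 ^+ 2 + x 0 1 ^+ 2 + x 0 2 ^+ 2).
Definition tim (R : realType) (x : 'rV[R]_4) : R := x 0 3.

(* Harrington-Shepard prepotential; at r = 0 it is given by its (smooth) limit
   r -> 0, 1 + 2 pi^2 rho^2 / (beta^2 (1 - cos(2 pi tau/beta))) *)
Definition Pi (R : realType) (beta rho : R) (x : 'rV[R]_4) : R :=
  let r := rad x in let tau := tim x in
  if r == 0 then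
    1 + 2 * pi ^+ 2 * rho ^+ 2 / (beta ^+ 2 * (1 - cos (2 * pi * tau / beta)))
  else
    1 + pi * rho ^+ 2 / (beta * r) *
        (sinh (2 * pi * r / beta) / (cosh (2 * pi * r / beta) - cos (2 * pi * tau / beta))).

(* real colour components A^a_mu = (eta or etabar)^a_{mu nu} d_nu ln Pi;
   anti = false : caloron (etabar), anti = true : anticaloron (eta) *)
Definition thooft (R : realType) (anti : bool) : 'I_3 -> 'I_4 -> 'I_4 -> R :=
  if anti then eta R else etabar R.
Definition Acomp (R : realType) (anti : bool) (beta rho : R) (a : 'I_3) (mu : 'I_4)
  (x : 'rV[R]_4) : R :=
  \sum_(nu < 4) thooft R anti a mu nu * partial nu (fun y => ln (Pi beta rho y)) x.

Definition imagC (R : realType) : R[i] := Complex 0 1.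
Definition pauli (R : realType) (a : 'I_3) : 'M[R[i]]_2 :=
  \matrix_(i < 2, j < 2)
    (if a == 0 :> nat then (if i == j then 0 else 1)
     else if a == 1 :> nat then
       (if i == j then 0 else if i == 0 :> nat then - imagC R else imagC R)
     else (if i == j then (if i == 0 :> nat then 1 else -1) else 0)).
Definition tgen (R : realType) (a : 'I_3) : 'M[R[i]]_2 := (2%:R)^-1 *: pauli R a.

Definition Agauge (R : realType) (anti : bool) (beta rho : R) (mu : 'I_4)
  (x : 'rV[R]_4) : 'M[R[i]]_2 :=
  \sum_(a < 3) (Acomp anti beta rho a mu x)%:C *: tgen R a.

(* field strength F_{mu nu} = d_mu A_nu - d_nu A_mu - i [A_mu, A_nu];
   since t_a are constant, d_mu A_nu = (d_mu A^a_nu) t_a *)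
Definition Fstrength (R : realType) (anti : bool) (beta rho : R) (mu nu : 'I_4)
  (x : 'rV[R]_4) : 'M[R[i]]_2 :=
  \sum_(a < 3) (partial mu (Acomp anti beta rho a nu) x
                - partial nu (Acomp anti beta rho a mu) x)%:C *: tgen R a
  - imagC R *: (Agauge anti beta rho mu x *m Agauge anti beta rho nu x
                - Agauge anti beta rho nu x *m Agauge anti beta rho mu x).

Definition has_mx_derive (R : realType) (W : R -> 'M[R[i]]_2) (s : R)
  (D : 'M[R[i]]_2) : Prop :=
  forall i j : 'I_2,
    is_derive s (1 : R) (fun u => complex.Re (W u i j)) (complex.Re (D i j)) /\
    is_derive s (1 : R) (fun u => complex.Im (W u i j)) (complex.Im (D i j)).

(* W solves the parallel-transport equation along the straight segment
   s |-> y + s (z - y), s in [0,1]:  W(0) = 1,  dW/ds = i (z-y)_mu A_mu(y + s(z-y)) W(s)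
   (path ordering: later points to the left).  The Wilson line
   {y, z} = P exp[i \int dz_mu A_mu] is then W(1). *)
Definition wilson_sol (R : realType) (anti : bool) (beta rho : R)
  (y z : 'rV[R]_4) (W : R -> 'M[R[i]]_2) : Prop :=
  W 0 = 1%:M /\
  forall s : R, 0 <= s <= 1 ->
    has_mx_derive W s
      ((imagC R *: \sum_(mu < 4) ((z - y) 0 mu)%:C *:
                      Agauge anti beta rho mu (y + s *: (z - y))) *m W s).

(* the integrand I^a(tau, x), with the two Wilson lines given as
   W1 : from (tau,0) to (tau,x) and W2 : from (tau,x) to (tau,0) *)
Definition Iintegrand (R : realType) (anti : bool) (beta rho tau : R) (x : 'rV[R]_3)
  (W1 W2 : R -> 'M[R[i]]_2) (a : 'I_3) : R[i] :=
  \tr (tgen R a *m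
        \sum_(mu < 4) \sum_(nu < 4)
           (Fstrength anti beta rho mu nu (pt tau 0) *m W1 1 *m
            Fstrength anti beta rho mu nu (pt tau x) *m W2 1)).

(* Main.v *)
Require Import Defs.
From mathcomp Require Import all_boot all_order all_algebra.
From mathcomp Require Import all_classical all_reals all_analysis.
From mathcomp Require Import complex.
From mathcomp Require Import ring lra.
Import Order.TTheory GRing.Theory Num.Theory.
Local Open Scope ring_scope.
Local Open Scope classical_set_scope.
Local Open Scope complex_scope.

Lemma nbhs0N_sub (R : realType) (P : set R) : 0^' P -> 0^' (fun h => P (-h)).
Proof.
move=> HP.
have : (- (0:R))^' P by rewrite oppr0.
rewrite dnbhsN => -[A HA <-].
apply: filterS HA => h Ah; exists h => //.
Qed.

Lemma lim_compN (R : realType) (V : normedModType R) (g : R -> V) :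
  lim ((fun h => g (- h)) @ 0^') = lim (g @ 0^').
Proof.
congr lim; rewrite funeqE => P; rewrite propeqE; split => /=.
- move=> /nbhs0N_sub; rewrite /fmap /=.
  by apply: filterS => h /=; rewrite opprK.
- by move=> /nbhs0N_sub.
Qed.


Lemma lim_oppN (R : realType) (V : normedModType R) (hp : (point : V) = 0) (g : R -> V) :
  lim ((fun h => - g h) @ 0^') = - lim (g @ 0^').
Proof.
case: (pselect (cvg (g @ 0^'))) => cg.
  rewrite limN //.
have cg' : ~ cvg ((- g) x @[x --> 0^']) by rewrite is_cvgNE.
have -> : lim ((fun h => - g h) @ 0^') = point by apply: dvgP.
by rewrite (dvgP cg) hp oppr0.
Qed.

Definition sgn (R : realType) (i : 'I_4) : R := if (i < 3)%N then -1 else 1.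
Definition par (R : realType) (x : 'rV[R]_4) : 'rV[R]_4 :=
  \row_(i < 4) (sgn R i * x 0 i).
Arguments par {R} x.

Lemma sgn_pm (R : realType) i : sgn R i = 1 \/ sgn R i = -1.
Proof. by rewrite /sgn; case: ifP; [right|left]. Qed.

Lemma lim_pm (R : realType) (a b : R) (ha : a = 1 \/ a = -1) (hb : b = 1 \/ b = -1)
  (q : R -> (R : normedModType R)) :
  lim (((fun h => a * q (b * h)) : R -> (R : normedModType R)) @ 0^') = a * lim (q @ 0^').
Proof.
have hp : (point : (R : normedModType R)) = 0 by reflexivity.
case: ha => ->; case: hb => ->.
- have -> : (fun h => 1 * q (1 * h)) = q by apply: funext => h; rewrite !mul1r.
  by rewrite mul1r.
- have -> : (fun h => 1 * q (-1 * h)) = (fun h => q (- h)).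
    by apply: funext => h; rewrite mul1r mulN1r.
  by rewrite mul1r lim_compN.
- have -> : (fun h => -1 * q (1 * h)) = (fun h => - q h).
    by apply: funext => h; rewrite mul1r mulN1r.
  by rewrite mulN1r lim_oppN.
- have -> : (fun h => -1 * q (-1 * h)) = (fun h => - (fun h => q (- h)) h).
    by apply: funext => h; rewrite !mulN1r.
  by rewrite mulN1r lim_oppN // lim_compN.
Qed.

Lemma par_shift (R : realType) nu (h : R) x :
  par (h *: evec R nu + x) = (sgn R nu * h) *: evec R nu + par x.
Proof.
apply/rowP => i; rewrite !mxE /=.
case: (eqVneq i nu) => [->|ne]; first by rewrite mulrDr mulrA.
by rewrite /= ?mulr0n ?mulr0 ?add0r.
Qed.

Lemma partial_par (R : realType) (c : R) (hc : c = 1 \/ c = -1) nu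
  (f : 'rV[R]_4 -> R) x :
  partial nu (fun y => c * f (par y)) x = c * sgn R nu * partial nu f (par x).
Proof.
rewrite /partial /derive /=.
set q := (fun h : R => h^-1 *: ((f \o shift (par x)) (h *: evec R nu) - f (par x))).
have hs := sgn_pm R nu.
have E : forall h : R, h^-1 *: (((fun y => c * f (par y)) \o shift x) (h *: evec R nu)
           - c * f (par x)) = (c * sgn R nu) * q (sgn R nu * h).
  move=> h; rewrite /q /= par_shift.
  case: hs => ->; rewrite ?mul1r ?mulN1r ?invrN ?invr1;
    rewrite /GRing.scale /=; ring.
rewrite (funext E).
apply: lim_pm => //.
by case: hc => ->; case: hs => ->; rewrite ?mul1r ?mulN1r ?opprK; auto.
Qed.

Lemma eta_sgn (R : realType) a mu nu :
  eta R a mu nu * sgn R nu = sgn R mu * etabar R a mu nu.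
Proof.
case: a => [[|[|[|k]]] Ha] //; case: mu => [[|[|[|[|m]]]] Hm] //;
  case: nu => [[|[|[|[|n]]]] Hn] //;
  rewrite /eta /etabar /epsS /leviCivita /kdelta /sgn /=; ring.
Qed.

Lemma rad_par (R : realType) (x : 'rV[R]_4) : Defs.rad (par x) = Defs.rad x.
Proof. by rewrite /Defs.rad !mxE /sgn /= !mulN1r !sqrrN. Qed.

Lemma Pi_par (R : realType) beta rho (x : 'rV[R]_4) :
  Pi beta rho (par x) = Pi beta rho x.
Proof.
rewrite /Pi rad_par /tim !mxE /sgn /=.
by rewrite mul1r.
Qed.

Lemma Acomp_par (R : realType) beta rho a mu (x : 'rV[R]_4) :
  Acomp true beta rho a mu x = sgn R mu * Acomp false beta rho a mu (par x).
Proof.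
rewrite /Acomp /thooft mulr_sumr; apply: eq_bigr => nu _.
rewrite {1}(_ : (fun y => ln (Pi beta rho y)) = (fun y => 1 * ln (Pi beta rho (par y)))); last first.
  by apply: funext => y; rewrite mul1r Pi_par.
rewrite (@partial_par R 1 _ nu (fun y => ln (Pi beta rho y))); last by left.
by rewrite mul1r mulrA eta_sgn mulrA.
Qed.

Lemma Acomp_parF (R : realType) beta rho a mu :
  Acomp true beta rho a mu = (fun y : 'rV[R]_4 => sgn R mu * Acomp false beta rho a mu (par y)).
Proof. by apply: funext => y; rewrite Acomp_par. Qed.

Lemma Agauge_par (R : realType) beta rho mu (x : 'rV[R]_4) :
  Agauge true beta rho mu x = (sgn R mu)%:C *: Agauge false beta rho mu (par x).
Proof.
rewrite /Agauge scaler_sumr; apply: eq_bigr => a _.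
by rewrite Acomp_par rmorphM scalerA.
Qed.

Lemma partial_Acomp_par (R : realType) beta rho a mu nu (x : 'rV[R]_4) :
  partial mu (Acomp true beta rho a nu) x =
  sgn R nu * sgn R mu * partial mu (Acomp false beta rho a nu) (par x).
Proof. rewrite Acomp_parF. rewrite (@partial_par R (sgn R nu) (sgn_pm R nu) mu (Acomp false beta rho a nu)). done. Qed.
Lemma F_alg (R : realType) (Pt Pf : 'I_3 -> R) (At Bt Af Bf : 'M[R[i]]_2) (s1 s2 : R) :
  (forall a, Pt a = s1 * s2 * Pf a) -> At = s1%:C *: Af -> Bt = s2%:C *: Bf ->
  \sum_(a < 3) (Pt a)%:C *: tgen R a - imagC R *: (At *m Bt - Bt *m At) =
  (s1 * s2)%:C *: (\sum_(a < 3) (Pf a)%:C *: tgen R a - imagC R *: (Af *m Bf - Bf *m Af)).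
Proof.
move=> HP -> ->.
rewrite [RHS]scalerBr [in RHS]scaler_sumr.
under eq_bigr => a _ do rewrite HP rmorphM -scalerA.
rewrite -!scalemxAl -!scalemxAr !scalerA -!rmorphM.
rewrite (mulrC s2 s1) -scalerBr !scalerA.
by rewrite [imagC R * _]mulrC.
Qed.

Lemma Fstrength_par (R : realType) beta rho mu nu (x : 'rV[R]_4) :
  Fstrength true beta rho mu nu x =
  (sgn R mu * sgn R nu)%:C *: Fstrength false beta rho mu nu (par x).
Proof.
rewrite /Fstrength.
apply: (@F_alg R (fun a => partial mu (Acomp true beta rho a nu) x - partial nu (Acomp true beta rho a mu) x)
  (fun a => partial mu (Acomp false beta rho a nu) (par x) - partial nu (Acomp false beta rho a mu) (par x))).
- by move=> a; rewrite !partial_Acomp_par mulrBr [sgn R nu * _]mulrC.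
- exact: Agauge_par.
- exact: Agauge_par.
Qed.

Lemma par_lin (R : realType) (y z : 'rV[R]_4) (s : R) :
  par (y + s *: (z - y)) = par y + s *: (par z - par y).
Proof. by apply/rowP => i; rewrite !mxE; ring. Qed.

Lemma Msum_par (R : realType) beta rho (y z : 'rV[R]_4) (s : R) :
  \sum_(mu < 4) ((z - y) 0 mu)%:C *: Agauge true beta rho mu (y + s *: (z - y)) =
  \sum_(mu < 4) ((par z - par y) 0 mu)%:C *:
     Agauge false beta rho mu (par y + s *: (par z - par y)).
Proof.
apply: eq_bigr => mu _.
have E : (z - y) 0 mu * sgn R mu = (par z - par y) 0 mu.
  by rewrite !mxE mulrBl [sgn R mu * _]mulrC [sgn R mu * y 0 mu]mulrC.
rewrite Agauge_par scalerA -E rmorphM par_lin.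
done.
Qed.


Lemma wilson_par (R : realType) beta rho (y z : 'rV[R]_4) W :
  wilson_sol true beta rho y z W -> wilson_sol false beta rho (par y) (par z) W.
Proof.
move=> [H0 HD]; split; first exact: H0.
move=> s hs. rewrite -(@Msum_par R beta rho y z s). exact: HD.
Qed.

Lemma par_pt (R : realType) tau (v : 'rV[R]_3) : par (pt tau v) = pt tau (- v).
Proof.
apply/rowP => i; rewrite !mxE /sgn.
by case: ifP => _; rewrite ?mulN1r ?mul1r.
Qed.

Lemma par_pt0 (R : realType) tau : par (pt tau (0 : 'rV[R]_3)) = pt tau 0.
Proof. by rewrite par_pt oppr0. Qed.

Notation cRe := complex.Re.
Notation cIm := complex.Im.
Lemma ReD (R : realType) (x y : R[i]) : cRe (x + y) = cRe x + cRe y.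
Proof. by case: x; case: y. Qed.
Lemma ImD (R : realType) (x y : R[i]) : cIm (x + y) = cIm x + cIm y.
Proof. by case: x; case: y. Qed.
Lemma ReM (R : realType) (x y : R[i]) : cRe (x * y) = cRe x * cRe y - cIm x * cIm y.
Proof. by case: x => a b; case: y => c d. Qed.
Lemma ImM (R : realType) (x y : R[i]) : cIm (x * y) = cRe x * cIm y + cIm x * cRe y.
Proof. by case: x => a b; case: y => c d. Qed.
Lemma ReB (R : realType) (x y : R[i]) : cRe (x - y) = cRe x - cRe y.
Proof. by case: x; case: y. Qed.
Lemma ImB (R : realType) (x y : R[i]) : cIm (x - y) = cIm x - cIm y.
Proof. by case: x; case: y. Qed.
Lemma ReC (R : realType) (a : R) : cRe (a%:C) = a.
Proof. by []. Qed.
Lemma ImC (R : realType) (a : R) : cIm (a%:C) = 0.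
Proof. by []. Qed.

Lemma sum2 (T : nmodType) (F : 'I_2 -> T) : \sum_(i < 2) F i = F 0 + F 1.
Proof. rewrite big_ord_recl big_ord1. congr (_ + F _). by apply: val_inj. Qed.

Lemma add_der (R : realType) (f g : R -> R) df dg (s : R) :
  is_derive s (1:R) f df -> is_derive s (1:R) g dg ->
  is_derive s (1:R) (fun t => f t + g t) (df + dg).
Proof. move=> hf hg; exact: (is_deriveD hf hg). Qed.

Lemma sub_der (R : realType) (f g : R -> R) df dg (s : R) :
  is_derive s (1:R) f df -> is_derive s (1:R) g dg ->
  is_derive s (1:R) (fun t => f t - g t) (df - dg).
Proof. move=> hf hg; exact: (is_deriveB hf hg). Qed.

Lemma sq_der (R : realType) (f : R -> R) df (s : R) :
  is_derive s (1:R) f df ->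
  is_derive s (1:R) (fun t => f t * f t) (2 * f s * df).
Proof.
move=> hf; apply: is_derive_eq (is_deriveM hf hf) _.
by rewrite /GRing.scale /=; ring.
Qed.

Lemma sum2_der (R : realType) (h : 'I_2 -> R -> R) (dh : 'I_2 -> R) (s : R) :
  (forall i, is_derive s (1:R) (h i) (dh i)) ->
  is_derive s (1:R) (fun t => \sum_(i < 2) h i t) (\sum_(i < 2) dh i).
Proof.
move=> hd.
have -> : (fun t => \sum_(i < 2) h i t) = (fun t => h 0 t + h 1 t).
  by apply: funext => t; rewrite sum2.
rewrite sum2; exact: add_der.
Qed.

Lemma ode_unique (R : realType) (M W1 W2 : R -> 'M[R[i]]_2) :
  (forall s i j, cRe (M s i j) = - cRe (M s j i) /\ cIm (M s i j) = cIm (M s j i)) ->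
  W1 0 = W2 0 ->
  (forall s, 0 <= s <= 1 -> has_mx_derive W1 s (M s *m W1 s)) ->
  (forall s, 0 <= s <= 1 -> has_mx_derive W2 s (M s *m W2 s)) ->
  W1 1 = W2 1.
Proof.
move=> hM h0 h1 h2.
pose gr i j t := cRe (W1 t i j) - cRe (W2 t i j).
pose gi i j t := cIm (W1 t i j) - cIm (W2 t i j).
pose N t := \sum_(i < 2) \sum_(j < 2) (gr i j t * gr i j t + gi i j t * gi i j t).
have dN : forall s : R, 0 <= s <= 1 -> is_derive s (1:R) N 0.
  move=> s hs.
  have dgr : forall i j, is_derive s (1:R) (gr i j)
      (cRe ((M s *m W1 s) i j) - cRe ((M s *m W2 s) i j)).
    move=> i j; exact: sub_der (h1 s hs i j).1 (h2 s hs i j).1.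
  have dgi : forall i j, is_derive s (1:R) (gi i j)
      (cIm ((M s *m W1 s) i j) - cIm ((M s *m W2 s) i j)).
    move=> i j; exact: sub_der (h1 s hs i j).2 (h2 s hs i j).2.
  apply: is_derive_eq.
    apply: sum2_der => i; apply: sum2_der => j; apply: add_der; exact: sq_der.
  have [r01 _] := hM s 1 0.
  have [r00 _] := hM s 0 0.
  have [r11 _] := hM s 1 1.
  have [_ i01] := hM s 1 0.
  have e00 : cRe (M s 0 0) = 0 by lra.
  have e11 : cRe (M s 1 1) = 0 by lra.
  rewrite !sum2 /gr /gi !mxE !sum2 !ReD !ImD !ReM !ImM r01 i01 e00 e11.
  rewrite /GRing.scale /=.
  ring.
have [c _] : exists2 c : R, c \in `[0, 1]%R & N 1 - N 0 = (fun _ => 0) c * (1 - 0).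
  apply: MVT_segment; first exact: ler01.
    move=> x; rewrite in_itv /= => /andP [ha hb]; apply: dN.
    by rewrite !ltW.
  apply: derivable_within_continuous => x.
  rewrite in_itv /= => hx. by have [] := dN x hx.
rewrite mul0r.
have -> : N 0 = 0.
  rewrite /N /gr /gi h0.
  by rewrite !sum2 !subrr !mulr0 !addr0.
rewrite subr0 /N !sum2 => HN.
have sq (x : R) : 0 <= x * x by rewrite -expr2 sqr_ge0.
have zz : forall i j, gr i j 1 * gr i j 1 = 0 /\ gi i j 1 * gi i j 1 = 0.
  have := sq (gr 0 0 1); have := sq (gr 0 1 1); have := sq (gr 1 0 1); have := sq (gr 1 1 1).
  have := sq (gi 0 0 1); have := sq (gi 0 1 1); have := sq (gi 1 0 1); have := sq (gi 1 1 1).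
  move: HN.
  set a1 := gr 0 0 1 * gr 0 0 1; set a2 := gr 0 1 1 * gr 0 1 1.
  set a3 := gr 1 0 1 * gr 1 0 1; set a4 := gr 1 1 1 * gr 1 1 1.
  set b1 := gi 0 0 1 * gi 0 0 1; set b2 := gi 0 1 1 * gi 0 1 1.
  set b3 := gi 1 0 1 * gi 1 0 1; set b4 := gi 1 1 1 * gi 1 1 1.
  move=> HN q1 q2 q3 q4 q5 q6 q7 q8.
  have Z : [/\ a1 = 0, a2 = 0, a3 = 0 & a4 = 0] /\ [/\ b1 = 0, b2 = 0, b3 = 0 & b4 = 0].
    by split; split; lra.
  case: Z => [[e1 e2 e3 e4] [f1 f2 f3 f4]] i j.
  have i2 : forall i : 'I_2, i = 0 \/ i = 1.
    by case => [[|[|k]] Hk]; [left|right|]; try apply: val_inj.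
  by case: (i2 i) => ->; case: (i2 j) => ->; split.
apply/matrixP => i j.
have [z1 z2] := zz i j.
move: z1 z2; rewrite /gr /gi.
case: (W1 1 i j) => a b; case: (W2 1 i j) => c' d /=.
move=> /eqP; rewrite mulf_eq0 orbb subr_eq0 => /eqP ->.
move=> /eqP; rewrite mulf_eq0 orbb subr_eq0 => /eqP ->.
by [].
Qed.

Definition herm (R : realType) (H : 'M[R[i]]_2) :=
  forall i j, cRe (H i j) = cRe (H j i) /\ cIm (H i j) = - cIm (H j i).
Arguments herm {R} H.

Lemma herm0 (R : realType) : herm (0 : 'M[R[i]]_2).
Proof. by move=> i j; rewrite !mxE /= oppr0. Qed.

Lemma hermD (R : realType) (A B : 'M[R[i]]_2) : herm A -> herm B -> herm (A + B).
Proof.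
move=> hA hB i j; rewrite !mxE !ReD !ImD.
have [a1 a2] := hA i j; have [b1 b2] := hB i j.
by rewrite a1 a2 b1 b2 opprD.
Qed.

Lemma hermZ (R : realType) (k : R[i]) (A : 'M[R[i]]_2) : cIm k = 0 -> herm A -> herm (k *: A).
Proof.
move=> hk hA i j; rewrite !mxE !ReM !ImM hk.
have [a1 a2] := hA i j.
by rewrite a1 a2 !mul0r !subr0 !addr0 mulrN.
Qed.

Lemma herm_sum (R : realType) n (F : 'I_n -> 'M[R[i]]_2) :
  (forall k, herm (F k)) -> herm (\sum_(k < n) F k).
Proof.
move=> hF; elim/big_ind: _ => //; [exact: herm0 | exact: hermD].
Qed.

Lemma ord2_cases (i : 'I_2) : i = 0 \/ i = 1.
Proof. by case: i => [[|[|k]] Hk]; [left|right|]; try apply: val_inj. Qed.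

Lemma ord3_cases (i : 'I_3) : i = @Ordinal 3 0 isT \/ i = @Ordinal 3 1 isT \/ i = @Ordinal 3 2 isT.
Proof.
case: i => [[|[|[|k]]] Hk].
- by left; apply: val_inj.
- by right; left; apply: val_inj.
- by right; right; apply: val_inj.
- by [].
Qed.

Lemma herm_pauli (R : realType) a : herm (pauli R a).
Proof.
move=> i j.
case: (ord3_cases a) => [->|[->|->]]; case: (ord2_cases i) => ->; case: (ord2_cases j) => ->;
  rewrite /pauli !mxE /= ?oppr0 ?opprK; by split.
Qed.

Lemma herm_tgen (R : realType) a : herm (tgen R a).
Proof.
apply: hermZ; last exact: herm_pauli.
have -> : (2%:R : R[i]) = (2%:R : R)%:C by rewrite rmorph_nat.
by rewrite -fmorphV.
Qed.


Lemma wilson_unique (R : realType) anti beta rho (y z : 'rV[R]_4) W1 W2 :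
  wilson_sol anti beta rho y z W1 -> wilson_sol anti beta rho y z W2 -> W1 1 = W2 1.
Proof.
move=> [h01 hd1] [h02 hd2].
apply: (@ode_unique R (fun s => imagC R *: \sum_(mu < 4) ((z - y) 0 mu)%:C *:
                       Agauge anti beta rho mu (y + s *: (z - y))) W1 W2).
- move=> s i j.
  have H : herm (\sum_(mu < 4) ((z - y) 0 mu)%:C *: Agauge anti beta rho mu (y + s *: (z - y))).
    apply: herm_sum => mu; apply: hermZ; first exact: ImC.
    rewrite /Agauge; apply: herm_sum => b; apply: hermZ; first exact: ImC.
    exact: herm_tgen.
  move: H; set S := \sum_(mu < 4) _ => H.
  have [e1 e2] := H i j.
  rewrite !mxE.
  move: e1 e2; case: (S i j) => a b; case: (S j i) => c d /= e1 e2.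
  rewrite e1 e2; split; ring.
- by rewrite h01 h02.
- exact: hd1.
- exact: hd2.
Qed.

Lemma tr_eq (R : realType) (t A B : 'M[R[i]]_2) : A = B -> \tr (t *m A) = \tr (t *m B).
Proof. by move=> ->. Qed.

Lemma prod_eq (R : realType) (k : R) (F0 F0' F1 F1' W1 W2 : 'M[R[i]]_2) :
  k * k = 1 -> F0 = k%:C *: F0' -> F1 = k%:C *: F1' ->
  F0 *m W1 *m F1 *m W2 = F0' *m W1 *m F1' *m W2.
Proof.
move=> hk -> ->.
rewrite -!scalemxAl -scalemxAr -!scalemxAl !scalerA -!rmorphM hk.
by rewrite scale1r.
Qed.

Local Close Scope classical_set_scope.
Local Close Scope complex_scope.

Theorem proposition4 (R : realType) (beta rho : R) (hbeta : 0 < beta) (hrho : 0 <= rho)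
  (tau : R) (x : 'rV[R]_3)
  (hdef : rho = 0 \/ cos (2 * pi * tau / beta) != 1)
  (WA1 WA2 WC1 WC2 : R -> 'M[R[i]]_2) :
  wilson_sol true beta rho (pt tau 0) (pt tau x) WA1 ->
  wilson_sol true beta rho (pt tau x) (pt tau 0) WA2 ->
  wilson_sol false beta rho (pt tau 0) (pt tau (- x)) WC1 ->
  wilson_sol false beta rho (pt tau (- x)) (pt tau 0) WC2 ->
  forall a : 'I_3,
    Iintegrand true beta rho tau x WA1 WA2 a =
    Iintegrand false beta rho tau (- x) WC1 WC2 a.
Proof.
move=> hA1 hA2 hC1 hC2 a.
have E1 : WA1 1 = WC1 1.
  have := @wilson_par R beta rho _ _ _ hA1; rewrite par_pt0 par_pt => h.
  exact: (@wilson_unique R _ _ _ _ _ _ _ h hC1).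
have E2 : WA2 1 = WC2 1.
  have := @wilson_par R beta rho _ _ _ hA2; rewrite par_pt0 par_pt => h.
  exact: (@wilson_unique R _ _ _ _ _ _ _ h hC2).
rewrite /Iintegrand E1 E2.
apply: tr_eq.
apply: eq_bigr => mu _; apply: eq_bigr => nu _.
have F0 := @Fstrength_par R beta rho mu nu (pt tau 0).
have F1 := @Fstrength_par R beta rho mu nu (pt tau x).
rewrite par_pt0 in F0; rewrite par_pt in F1.
apply: (@prod_eq R _ _ _ _ _ _ _ _ F0 F1).
by case: (sgn_pm R mu) => ->; case: (sgn_pm R nu) => ->; ring.
Qed.
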